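(* Let $g>0$, let $\hat\nu:\mathbb R\to[\nu_0,\nu_1]$ be a stretch-limiting constitutive function as in the context, and let $a>0$, $b\in\mathbb R$ with $a^2+b^2<\nu_0^2$. Let $\gamma_n>0$ with $\gamma_n\to0$, and for each $n$ let $\lambda_n<0$, $\mu_n\in\mathbb R$ satisfy $$a\mathbf i+b\mathbf k=\int_0^1\frac{\hat\nu(-\delta_n(s))}{-\delta_n(s)}\big(\lambda_n\mathbf i+(\mu_n+g\gamma_n s)\mathbf k\big)\,ds,\qquad \delta_n(s)=\sqrt{\lambda_n^2+(\mu_n+g\gamma_n s)^2}.$$ Then $\lim_{n\to\infty}\sqrt{\lambda_n^2+\mu_n^2}=0$.
   Context: Stretch-limited constitutive function: constants $N_0<0<N_1$, $0<\nu_0<1<\nu_1$ with $\hat\nu(N)=\nu_0$ for $N\le N_0$, $\hat\nu(N)=\nu_1$ for $N\ge N_1$, $\hat\nu\in C^\infty([N_0,N_1];[\nu_0,\nu_1])$, $\hat\nu(0)=1$, $\hat\nu'\ge c>0$ on $[N_0,N_1]$. The equation describes a compressive uniform catenary with mass $\gamma_n$ per unit reference length and supports at $\mathbf 0$ and $a\mathbf i+b\mathbf k$. *)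

(* Defs.v *)
From Stdlib Require Import Reals.
From Coquelicot Require Import Coquelicot.
Open Scope R_scope.

Definition stretch_limited (nu : R -> R) (N0 N1 nu0 nu1 : R) : Prop :=
  N0 < 0 < N1 /\ 0 < nu0 < 1 /\ 1 < nu1 /\
  (forall N, nu0 <= nu N <= nu1) /\
  (forall N, N <= N0 -> nu N = nu0) /\
  (forall N, N1 <= N -> nu N = nu1) /\
  nu 0 = 1 /\
  exists (f : R -> R) (c : R), 0 < c /\
    (forall (k : nat) (x : R), ex_derive_n f k x) /\
    (forall N, N0 <= N <= N1 -> nu N = f N /\ c <= Derive f N).

Definition delta (g gam lam mu s : R) : R :=
  sqrt (lam ^ 2 + (mu + g * gam * s) ^ 2).

(* Main.v *)
Require Import Defs.
From Stdlib Require Import Reals Lra Psatz.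
From Coquelicot Require Import Coquelicot.
Open Scope R_scope.

Lemma helper (nu h : R -> R) (nu0 lam mu k a b : R) :
  (forall N, nu0 <= nu N) ->
  (forall y, y <= 0 -> nu y = h y) ->
  (forall y, continuous h y) ->
  0 < nu0 -> lam < 0 -> 0 < k ->
  k <= sqrt (lam ^ 2 + mu ^ 2) ->
  a = RInt (fun s => nu (- sqrt (lam ^ 2 + (mu + k * s) ^ 2))
                     / (- sqrt (lam ^ 2 + (mu + k * s) ^ 2)) * lam) 0 1 ->
  b = RInt (fun s => nu (- sqrt (lam ^ 2 + (mu + k * s) ^ 2))
                     / (- sqrt (lam ^ 2 + (mu + k * s) ^ 2)) * (mu + k * s)) 0 1 ->
  nu0 * (sqrt (lam ^ 2 + mu ^ 2) - k) <= sqrt (a ^ 2 + b ^ 2) * (sqrt (lam ^ 2 + mu ^ 2) + k).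
Proof.
  intros Hnu Hh hc H0 Hl Hk Hd Ha Hb.
  set (D := fun s => sqrt (lam ^ 2 + (mu + k * s) ^ 2)).
  set (d0 := sqrt (lam ^ 2 + mu ^ 2)).
  fold d0 in Hd.
  assert (Dpos : forall s, 0 < D s).
  { intro s; unfold D; apply sqrt_lt_R0; pose proof (pow2_ge_0 (mu+k*s)); nra. }
  assert (Dsq : forall s, D s * D s = lam ^ 2 + (mu + k * s) ^ 2).
  { intro s; unfold D; apply sqrt_sqrt; pose proof (pow2_ge_0 (mu+k*s)); nra. }
  assert (d0pos : 0 < d0) by (unfold d0; apply sqrt_lt_R0; pose proof (pow2_ge_0 mu); nra).
  assert (d0sq : d0 * d0 = lam ^ 2 + mu ^ 2) by (unfold d0; apply sqrt_sqrt; pose proof (pow2_ge_0 mu); nra).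
  assert (cD : forall s, continuous D s).
  { intro s. apply (ex_derive_continuous (K:=R_AbsRing) (V:=R_NormedModule)). unfold D. auto_derive. pose proof (pow2_ge_0 (mu+k*s)). nra. }
  assert (cG : forall s, continuous (fun s => h (- D s) / (- D s)) s).
  { intro s. apply (continuous_mult (fun s => h (- D s)) (fun s => / (- D s))).
    - apply (continuous_comp (fun s => - D s) h). apply (continuous_opp D). apply cD. apply hc.
    - apply continuous_Rinv_comp. apply (continuous_opp D). apply cD.
      specialize (Dpos s). lra. }
  assert (e1 : ex_RInt (fun s => nu (- D s) / (- D s) * lam) 0 1).
  { apply ex_RInt_ext with (fun s => h (- D s) / (- D s) * lam).
    intros x _. rewrite Hh; [reflexivity| specialize (Dpos x); lra].
    apply (ex_RInt_continuous (V:=R_CompleteNormedModule)). intros z _.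
    apply (continuous_mult (fun s => h (- D s) / (- D s)) (fun _ => lam)).
    apply cG. apply continuous_const. }
  assert (e2 : ex_RInt (fun s => nu (- D s) / (- D s) * (mu + k * s)) 0 1).
  { apply ex_RInt_ext with (fun s => h (- D s) / (- D s) * (mu + k * s)).
    intros x _. rewrite Hh; [reflexivity| specialize (Dpos x); lra].
    apply (ex_RInt_continuous (V:=R_CompleteNormedModule)). intros z _.
    apply (continuous_mult (fun s => h (- D s) / (- D s)) (fun s => mu + k * s)).
    apply cG. apply (ex_derive_continuous (K:=R_AbsRing) (V:=R_NormedModule)). auto_derive. auto. }
  fold D in Ha, Hb.
  assert (Hlin : RInt (fun s => lam * (nu (- D s) / (- D s) * lam)
                               + mu * (nu (- D s) / (- D s) * (mu + k * s))) 0 1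
                 = lam * a + mu * b).
  { pose proof (RInt_plus (V:=R_CompleteNormedModule)
       (fun s => scal lam (nu (- D s) / (- D s) * lam))
       (fun s => scal mu (nu (- D s) / (- D s) * (mu + k * s))) 0 1
       (ex_RInt_scal _ _ _ _ e1) (ex_RInt_scal _ _ _ _ e2)) as E.
    rewrite (RInt_scal (V:=R_CompleteNormedModule)) in E by exact e1.
    rewrite (RInt_scal (V:=R_CompleteNormedModule)) in E by exact e2.
    rewrite Ha, Hb. exact E. }
  set (c := nu0 * d0 * (d0 - k) / (d0 + k)).
  assert (c0 : 0 <= c).
  { unfold c, Rdiv. apply Rmult_le_pos. apply Rmult_le_pos. apply Rmult_le_pos. lra. lra. lra. left; apply Rinv_0_lt_compat; lra. }
  assert (Hle : lam * a + mu * b <= - c).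
  { rewrite <- Hlin.
    replace (- c) with (RInt (fun _ => - c) 0 1).
    2:{ rewrite (RInt_const (V:=R_CompleteNormedModule)). change ((1-0)*(-c) = -c). ring. }
    apply RInt_le. lra.
    exact (ex_RInt_plus _ _ _ _ (ex_RInt_scal _ _ _ lam e1) (ex_RInt_scal _ _ _ mu e2)).
    apply ex_RInt_const.
    intros s Hs.
    set (X := nu (- D s) / D s).
    replace (nu (- D s) / - D s) with (- X) by (unfold X; field; specialize (Dpos s); lra).
    set (N := lam * lam + mu * (mu + k * s)).
    assert (HN : d0 * (d0 - k) <= N).
    { unfold N. assert (mu * mu <= d0 * d0) by nra.
      assert (- d0 <= mu <= d0) by (split; nra).
      assert (0 <= (mu+d0)*(k*s)) by (apply Rmult_le_pos; nra).
      assert (0 <= d0*(k*(1-s))) by (apply Rmult_le_pos; nra).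
      assert (lam * lam + mu * mu = d0 * d0) by (rewrite d0sq; ring).
      nra. }
    assert (HD : D s <= d0 + k).
    { specialize (Dsq s). specialize (Dpos s). assert (mu * mu <= d0 * d0) by nra.
      assert (- d0 <= mu <= d0) by (split; nra).
      assert (0 <= (d0-mu)*(k*s)) by (apply Rmult_le_pos; nra).
      assert (0 <= d0*(k*(1-s))) by (apply Rmult_le_pos; nra).
      assert (0 <= k*s <= k) by (split; nra).
      assert (k*s*(k*s) <= k*k) by (apply Rmult_le_compat; lra).
      assert (D s * D s <= (d0 + k) * (d0 + k)).
      { rewrite Dsq. replace (lam ^ 2 + (mu + k * s) ^ 2) with (d0*d0 + 2*mu*(k*s) + k*s*(k*s)) by (rewrite d0sq; ring). nra. }
      nra. }
    assert (HX : nu0 / (d0 + k) <= X).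
    { unfold X. specialize (Dpos s). specialize (Hnu (- D s)).
      apply Rle_trans with (nu0 / D s).
      - unfold Rdiv. apply Rmult_le_compat_l. lra. apply Rinv_le_contravar; lra.
      - unfold Rdiv. apply Rmult_le_compat_r. left; apply Rinv_0_lt_compat; lra. lra. }
    assert (HY : 0 <= nu0 / (d0 + k)) by (unfold Rdiv; apply Rmult_le_pos; [lra| left; apply Rinv_0_lt_compat; lra]).
    assert (Hc : c = nu0 / (d0 + k) * (d0 * (d0 - k))) by (unfold c; field; lra).
    rewrite Hc.
    assert (0 <= d0 * (d0 - k)) by nra.
    assert (X * N >= nu0 / (d0 + k) * (d0 * (d0 - k))) by nra.
    match goal with |- ?L <= _ => replace L with (- (X * N)) by (unfold N; ring) end. lra. }
  set (S := sqrt (a ^ 2 + b ^ 2)).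
  assert (S0 : 0 <= S) by apply sqrt_pos.
  assert (Ssq : S * S = a ^ 2 + b ^ 2) by (apply sqrt_sqrt; nra).
  assert (CS : (lam * a + mu * b) ^ 2 <= (d0 * S) ^ 2).
  { replace ((d0 * S) ^ 2) with ((d0 * d0) * (S * S)) by ring.
    rewrite d0sq, Ssq. pose proof (pow2_ge_0 (lam*b - mu*a)). nra. }
  assert (c <= d0 * S).
  { destruct (Rle_lt_dec c (d0*S)) as [|Hlt]; [assumption|exfalso].
    assert (0 <= d0*S) by (apply Rmult_le_pos; lra).
    assert ((d0*S)*(d0*S) < c*c) by nra.
    assert (c*c <= (lam * a + mu * b)*(lam * a + mu * b)) by nra.
    simpl in CS. nra. }
  unfold c in H.
  assert (nu0 * d0 * (d0 - k) <= d0 * S * (d0 + k)).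
  { apply (Rmult_le_compat_r (d0 + k)) in H; [|lra].
    replace (nu0 * d0 * (d0 - k) / (d0 + k) * (d0 + k)) with (nu0 * d0 * (d0 - k)) in H by (field; lra).
    exact H. }
  nra.
Qed.

Theorem lemma4p6
  (g : R) (nu : R -> R) (N0 N1 nu0 nu1 a b : R)
  (gam lam mu : nat -> R) :
  0 < g ->
  stretch_limited nu N0 N1 nu0 nu1 ->
  0 < a -> a ^ 2 + b ^ 2 < nu0 ^ 2 ->
  (forall n, 0 < gam n) ->
  is_lim_seq gam 0 ->
  (forall n, lam n < 0) ->
  (forall n,
     a = RInt (fun s => nu (- delta g (gam n) (lam n) (mu n) s)
                        / (- delta g (gam n) (lam n) (mu n) s) * lam n) 0 1 /\
     b = RInt (fun s => nu (- delta g (gam n) (lam n) (mu n) s)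
                        / (- delta g (gam n) (lam n) (mu n) s)
                        * (mu n + g * gam n * s)) 0 1) ->
  is_lim_seq (fun n => sqrt (lam n ^ 2 + mu n ^ 2)) 0.
Proof.
  intros Hg Hst Ha Hab Hgam Hlim Hlam Hint.
  destruct Hst as [[HN0 HN1] [[Hn0 Hn01] [Hn1 [Hbnd [Hlo [Hhi [Hz [f [c [Hc [Hf Hfn]]]]]]]]]]].
  set (h := fun y => f ((y + N0 + Rabs (y - N0)) / 2)).
  assert (Hh : forall y, y <= 0 -> nu y = h y).
  { intros y Hy. unfold h. destruct (Rle_lt_dec y N0) as [Hy0|Hy0].
    - rewrite Rabs_left1 by lra.
      replace ((y + N0 + - (y - N0)) / 2) with N0 by field.
      rewrite Hlo by lra. destruct (Hfn N0) as [E _]; [lra|]. rewrite <- E. rewrite Hlo; lra.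
    - rewrite Rabs_right by lra.
      replace ((y + N0 + (y - N0)) / 2) with y by field.
      destruct (Hfn y) as [E _]; [lra|]. exact E. }
  assert (hc : forall y, continuous h y).
  { intro y. unfold h.
    apply (continuous_comp (fun y => (y + N0 + Rabs (y - N0)) / 2) f).
    - apply (continuous_mult (fun y => y + N0 + Rabs (y - N0)) (fun _ => / 2)).
      + apply (continuous_plus (fun y => y + N0) (fun y => Rabs (y - N0))).
        * apply (ex_derive_continuous (K:=R_AbsRing) (V:=R_NormedModule)). auto_derive. auto.
        * apply continuous_Rabs_comp.
          apply (ex_derive_continuous (K:=R_AbsRing) (V:=R_NormedModule)). auto_derive. auto.
      + apply continuous_const.
    - apply (ex_derive_continuous (K:=R_AbsRing) (V:=R_NormedModule)).
      pose proof (Hf 1%nat ((y + N0 + Rabs (y - N0)) / 2)) as E. simpl in E. exact E. }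
  assert (Hnu : forall N, nu0 <= nu N) by (intro N; apply Hbnd).
  set (S := sqrt (a ^ 2 + b ^ 2)).
  assert (S0 : 0 <= S) by apply sqrt_pos.
  assert (Ssq : S * S = a ^ 2 + b ^ 2) by (apply sqrt_sqrt; pose proof (pow2_ge_0 a); pose proof (pow2_ge_0 b); lra).
  assert (SL : S < nu0).
  { destruct (Rlt_le_dec S nu0) as [|HH]; [assumption|]. simpl in Hab, Ssq. nra. }
  set (K := g * ((nu0 + S) / (nu0 - S))).
  assert (Hr : 1 <= (nu0 + S) / (nu0 - S)).
  { apply (Rmult_le_reg_r (nu0 - S)); [lra|]. unfold Rdiv. rewrite Rmult_assoc, Rinv_l by lra. lra. }
  assert (Hbound : forall n, sqrt (lam n ^ 2 + mu n ^ 2) <= K * gam n).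
  { intro n. specialize (Hgam n). unfold K.
    set (d0 := sqrt (lam n ^ 2 + mu n ^ 2)).
    destruct (Rlt_le_dec d0 (g * gam n)) as [Hlt|Hge].
    - assert (g * gam n <= g * gam n * ((nu0 + S) / (nu0 - S))).
      { rewrite <- (Rmult_1_r (g * gam n)) at 1. apply Rmult_le_compat_l; nra. }
      nra.
    - destruct (Hint n) as [Ea Eb]. unfold delta in Ea, Eb.
      pose proof (helper nu h nu0 (lam n) (mu n) (g * gam n) a b Hnu Hh hc Hn0 (Hlam n)
                   ltac:(nra) Hge Ea Eb) as HH.
      fold d0 S in HH.
      apply (Rmult_le_reg_r (nu0 - S)); [lra|].
      replace (g * ((nu0 + S) / (nu0 - S)) * gam n * (nu0 - S)) with (g * gam n * (nu0 + S)) by (field; lra).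
      nra. }
  apply is_lim_seq_le_le with (fun _ => 0) (fun n => K * gam n).
  - intro n. split. apply sqrt_pos. apply Hbound.
  - apply is_lim_seq_const.
  - replace (Finite 0) with (Rbar_mult K 0) by (simpl; f_equal; ring).
    apply is_lim_seq_scal_l. exact Hlim.
Qed.
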